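(* Let $G$ be an almost simple primitive permutation group on $\Omega$ with a normal subgroup $G_0$, and let $\omega\in\Omega$. If $K$ is a fixer of $G$ with $|K|\geqslant|G_\omega|$, then $K_0:=K\cap G_0$ is a fixer of $G_0$ (acting on $\Omega$) with $|K_0|\geqslant|(G_0)_\omega|$.
   Context: A subgroup $K$ of a permutation group $G\leqslant\mathrm{Sym}(\Omega)$ is a fixer if every element of $K$ fixes at least one point of $\Omega$. *)

(* Defs.v *)
From mathcomp Require Import all_boot all_fingroup all_solvable.
Set Implicit Arguments. Unset Strict Implicit. Unset Printing Implicit Defensive.
Local Open Scope group_scope.

Definition fixer (T : finType) (K : {set {perm T}}) : Prop :=
  forall k, k \in K -> exists x : T, k x = x.

(* G is almost simple: G has a nonabelian simple normal subgroup N with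
   trivial centraliser in G (so N <= G <= Aut N). *)
Definition almost_simple (gT : finGroupType) (G : {set gT}) : Prop :=
  exists N : {group gT},
    [/\ N <| G, simple N, ~~ abelian N & 'C_G(N) = 1].

(* Main.v *)
Require Import Defs.
From mathcomp Require Import all_boot all_fingroup all_solvable.
Local Open Scope group_scope.

Theorem lemma2p5 (T : finType) (G G0 K : {group {perm T}}) (w : T) :
  almost_simple G ->
  [primitive G, on [set: T] | 'P] ->
  G0 <| G ->
  K \subset G ->
  fixer K ->
  #|'C_G[w | 'P]| <= #|K| ->
  fixer (K :&: G0) /\ #|'C_G0[w | 'P]| <= #|K :&: G0|.
Proof.
move=> _ primG nG0G sKG fixK leK; split.
  by move=> k /setIP[kK _]; apply: fixK.
have sG0G := normal_sub nG0G.
have nG0G' : G \subset 'N(G0) := normal_norm nG0G.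
have eqI : 'C_G[w | 'P] :&: G0 = 'C_G0[w | 'P].
  by rewrite setIAC (setIidPr sG0G) setIC.
have hKG0 : (#|K| * #|G0| <= #|G| * #|K :&: G0|)%N.
  rewrite mul_cardG leq_mul2r; apply/orP; right.
  apply: subset_leq_card; apply: mul_subG => //.
case: (prim_trans_norm primG nG0G) => [sub|trG0].
  have G01 : G0 :=: 1.
    apply/trivgP; apply: subset_trans (aperm_faithful G).
    by apply: subset_trans sub _; rewrite setIS.
  have -> : 'C_G0[w | 'P] = 1 by apply/trivgP; rewrite -G01; apply: subsetIl.
  by rewrite cards1 card_gt0; apply/set0Pn; exists 1; rewrite inE !group1.
have hCG : (#|'C_G[w | 'P]| * #|G0| = #|G| * #|'C_G0[w | 'P]|)%N.
  have trG : [transitive G, on [set: T] | 'P] by case/andP: primG.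
  have := subgroup_transitiveP (in_setT w) sG0G trG.
  move=> /(_ trG0) eqG.
  by rewrite mul_cardG eqG -eqI.
have Gpos : 0 < #|G| by apply: cardG_gt0.
rewrite -(leq_pmul2l Gpos) -hCG.
apply: leq_trans hKG0; rewrite leq_mul2r leK orbT //.
Qed.
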